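(* Let $G$ be a finite group, $S\le G$ a subgroup and $B$ an $S$-Galois algebra over a field $k$ which is simple as an algebra. Then the sequence $1\to\mathrm{Aut}_S(B)\xrightarrow{\mathrm{Ind}}\mathrm{Aut}_G(\mathrm{Ind}_S^G(B))\xrightarrow{\pi}N_G(S)/S$ is exact. Moreover, the sequence $1\to\mathrm{Aut}_S(B)\to\mathrm{Aut}_G(\mathrm{Ind}_S^G(B))\to N_G(S)/S\to1$ is exact if and only if $B\cong B^{(g)}$ as $S$-algebras for all $g\in N_G(S)$.
   Context: An $S$-algebra is a $k$-algebra with $S$ acting by algebra automorphisms; $\mathrm{Aut}_S(B)$ = $S$-equivariant algebra automorphisms. An $S$-Galois algebra is a nonzero $S$-algebra $B$ with $B^S=k$ and $B\otimes_kB\to\prod_{s\in S}B$, $x\otimes y\mapsto(x(s\cdot y))_s$, bijective. $\mathrm{Ind}_S^G(B)=\{r:G\to B\mid r(sg)=s\cdot r(g)\ \forall s\in S,g\in G\}$ with pointwise operations and $(g\cdot r)(x)=r(xg)$. The map $\mathrm{Ind}$ sends $f\in\mathrm{Aut}_S(B)$ to $r\mapsto f\circ r$. For a right coset $Sg$, $\chi_{Sg}\in\mathrm{Ind}_S^G(B)$ is the function equal to $1$ on $Sg$ and $0$ elsewhere; since $B$ is simple these are exactly the central primitive idempotents of $\mathrm{Ind}_S^G(B)$, and $\pi(F)=Sg$ where $Sg$ is the coset with $F(\chi_S)=\chi_{Sg}$; this defines a group homomorphism $\pi:\mathrm{Aut}_G(\mathrm{Ind}_S^G(B))\to N_G(S)/S$.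 For $g\in N_G(S)$, $B^{(g)}$ is $B$ with the $S$-action $h\cdot_g b=(ghg^{-1})\cdot b$. *)

(* Defs.v *)
From HB Require Import structures.
From mathcomp Require Import all_boot all_order all_algebra all_fingroup.
Set Implicit Arguments. Unset Strict Implicit. Unset Printing Implicit Defensive.
Import GRing.Theory.
Local Open Scope ring_scope.

(* G is the whole finite group gT; S : {group gT}. B : algType k (a k-algebra).
   An S-action on B is a function act : gT -> B -> B (only its values on S matter). *)

Definition alg_auto (k : fieldType) (B : algType k) (f : B -> B) : Prop :=
  [/\ (forall x y, f (x + y)%R = (f x + f y)%R),
      (forall x y, f (x * y)%R = (f x * f y)%R),
      f 1%R = 1%R,
      (forall (c : k) x, f (c *: x) = c *: f x)
    & bijective f].

Definition S_algebra (k : fieldType) (B : algType k) (gT : finGroupType)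
  (S : {group gT}) (act : gT -> B -> B) : Prop :=
  [/\ (forall s, s \in S -> alg_auto (act s)),
      (forall b, act 1%g b = b)
    & (forall s t b, s \in S -> t \in S -> act (s * t)%g b = act s (act t b))].

Definition bilinear_form (k : fieldType) (B : algType k) (beta : B -> B -> k) : Prop :=
  (forall (c : k) x1 x2 y, beta (c *: x1 + x2)%R y = (c * beta x1 y + beta x2 y)%R) /\
  (forall (c : k) x y1 y2, beta x (c *: y1 + y2)%R = (c * beta x y1 + beta x y2)%R).

(* The map B (x)_k B -> prod_{s in S} B, x(x)y |-> (x (s.y))_s,
   is bijective.  Surjectivity: every family (v_s)_{s in S} is the image of a finite
   sum of pure tensors.  Injectivity: if sum_i x_i (s.y_i) = 0 for all s in S, then
   sum_i x_i (x) y_i = 0 in B (x)_k B, i.e. (since over a field the dual of B(x)B is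
   the space of bilinear forms, and it separates points) every bilinear form
   vanishes on sum_i (x_i, y_i). *)
Definition S_Galois (k : fieldType) (B : algType k) (gT : finGroupType)
  (S : {group gT}) (act : gT -> B -> B) : Prop :=
  [/\ (1 : B) != 0,
      S_algebra S act,
      (forall b : B, (forall s, s \in S -> act s b = b) <-> exists c : k, b = c%:A),
      (forall v : {ffun gT -> B}, exists l : seq (B * B),
          forall s, s \in S -> v s = (\sum_(p <- l) p.1 * act s p.2)%R)
    & (forall l : seq (B * B),
          (forall s, s \in S -> (\sum_(p <- l) p.1 * act s p.2)%R = 0) ->
          forall beta : B -> B -> k, bilinear_form beta ->
            (\sum_(p <- l) beta p.1 p.2)%R = 0)].

Definition two_sided_ideal (k : fieldType) (B : algType k) (I : B -> Prop) : Prop :=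
  [/\ I 0, (forall x y, I x -> I y -> I (x + y)%R),
      (forall a x, I x -> I (a * x)%R) & (forall a x, I x -> I (x * a)%R)].

Definition simple_algebra (k : fieldType) (B : algType k) : Prop :=
  (1 : B) != 0 /\
  forall I : B -> Prop, two_sided_ideal I -> (forall x, I x -> x = 0) \/ (forall x, I x).

Definition AutS (k : fieldType) (B : algType k) (gT : finGroupType)
  (S : {group gT}) (act : gT -> B -> B) (f : B -> B) : Prop :=
  alg_auto f /\ forall s b, s \in S -> f (act s b) = act s (f b).

Definition inInd (k : fieldType) (B : algType k) (gT : finGroupType)
  (S : {group gT}) (act : gT -> B -> B) (r : {ffun gT -> B}) : Prop :=
  forall s g, s \in S -> r (s * g)%g = act s (r g).

Definition gact (B : Type) (gT : finGroupType) (g : gT) (r : {ffun gT -> B}) :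
  {ffun gT -> B} := [ffun x => r (x * g)%g].

Definition AutG (k : fieldType) (B : algType k) (gT : finGroupType)
  (S : {group gT}) (act : gT -> B -> B)
  (F : {ffun gT -> B} -> {ffun gT -> B}) : Prop :=
  (forall r, inInd S act r -> inInd S act (F r)) /\
  (forall r1 r2, inInd S act r1 -> inInd S act r2 -> F r1 = F r2 -> r1 = r2) /\
  (forall r', inInd S act r' -> exists2 r, inInd S act r & F r = r') /\
  (forall r1 r2, inInd S act r1 -> inInd S act r2 ->
     F [ffun x => (r1 x + r2 x)%R] = [ffun x => (F r1 x + F r2 x)%R]) /\
  (forall r1 r2, inInd S act r1 -> inInd S act r2 ->
     F [ffun x => (r1 x * r2 x)%R] = [ffun x => (F r1 x * F r2 x)%R]) /\
  F [ffun _ => 1%R] = [ffun _ => 1%R] /\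
  (forall (c : k) r, inInd S act r -> F [ffun x => c *: r x] = [ffun x => c *: F r x]) /\
  (forall g r, inInd S act r -> F (gact g r) = gact g (F r)).

Definition Ind_map (B : Type) (gT : finGroupType) (f : B -> B) (r : {ffun gT -> B}) :
  {ffun gT -> B} := [ffun x => f (r x)].

Definition chi (k : fieldType) (B : algType k) (gT : finGroupType) (A : {set gT}) :
  {ffun gT -> B} := [ffun x => if x \in A then 1%R else 0%R].

(* pi(F) = Sg  iff  F(chi_S) = chi_{Sg} *)
Definition pi_is (k : fieldType) (B : algType k) (gT : finGroupType) (S : {group gT})
  (F : {ffun gT -> B} -> {ffun gT -> B}) (g : gT) : Prop :=
  F (chi B S) = chi B (S :* g)%g.

Definition exact_left (k : fieldType) (B : algType k) (gT : finGroupType)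
  (S : {group gT}) (act : gT -> B -> B) : Prop :=
  (forall f1 f2, AutS S act f1 -> AutS S act f2 ->
     (forall r, inInd S act r -> Ind_map f1 r = Ind_map f2 r) -> f1 =1 f2) /\
  (forall F, AutG S act F ->
     (pi_is S F 1%g <-> exists2 f, AutS S act f & forall r, inInd S act r -> F r = Ind_map f r)).

Definition pi_surjective (k : fieldType) (B : algType k) (gT : finGroupType)
  (S : {group gT}) (act : gT -> B -> B) : Prop :=
  forall g, g \in 'N(S)%g -> exists2 F, AutG S act F & pi_is S F g.

Definition twist (B : Type) (gT : finGroupType) (act : gT -> B -> B) (g : gT) :
  gT -> B -> B := fun h b => act (g * h * g^-1)%g b.

Definition S_alg_iso (k : fieldType) (B : algType k) (gT : finGroupType)
  (S : {group gT}) (act act' : gT -> B -> B) : Prop :=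
  exists f : B -> B, alg_auto f /\ forall s b, s \in S -> f (act s b) = act' s (f b).

(* Main.v *)
From Pilot Require Import Defs.
From HB Require Import structures.
From mathcomp Require Import all_boot all_order all_algebra all_fingroup.
Import Pilot.Defs.
Set Implicit Arguments. Unset Strict Implicit. Unset Printing Implicit Defensive.
Import GRing.Theory.
Local Open Scope group_scope.

Definition rb (k : fieldType) (B : algType k) (gT : finGroupType)
  (S : {group gT}) (act : gT -> B -> B) (b : B) : {ffun gT -> B} :=
  [ffun x => if x \in S then act x b else 0%R].

Lemma aa0 (k : fieldType) (B : algType k) (f : B -> B) : alg_auto f -> f 0%R = 0%R.
Proof.
case=> fD _ _ _ _; have := fD 0%R 0%R; rewrite GRing.addr0 => h.
by apply: (@addrI _ (f 0%R)); rewrite addr0 -h.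
Qed.

Lemma inj_surj_bij (k : fieldType) (B : algType k) (f : B -> B) :
  injective f -> (forall y, exists x, f x = y) -> bijective f.
Proof.
move=> fi fs.
have fs' : forall y, exists x, f x == y by move=> y; have [x <-] := fs y; exists x.
exists (fun y => xchoose (fs' y)).
  by move=> x; apply: fi; exact/eqP/(xchooseP (fs' (f x))).
by move=> y; exact/eqP/(xchooseP (fs' y)).
Qed.


Lemma rb_in (k : fieldType) (B : algType k) (gT : finGroupType)
  (S : {group gT}) (act : gT -> B -> B) b :
  S_algebra S act -> inInd S act (rb S act b).
Proof.
case=> Ha A1 AM s g sS; rewrite !ffunE groupMl //.
case: ifP => gS; first by rewrite AM.
by rewrite aa0 //; exact: Ha.
Qed.

Lemma rb_1 (k : fieldType) (B : algType k) (gT : finGroupType)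
  (S : {group gT}) (act : gT -> B -> B) b :
  S_algebra S act -> rb S act b 1 = b.
Proof. by case=> _ A1 _; rewrite ffunE group1 A1. Qed.

Section L.
Lemma act0 (k : fieldType) (B : algType k) (gT : finGroupType)
  (S : {group gT}) (act : gT -> B -> B) s :
  S_algebra S act -> s \in S -> act s 0%R = 0%R.
Proof. by case=> Ha _ _ sS; apply: aa0; exact: Ha. Qed.

Lemma act1 (k : fieldType) (B : algType k) (gT : finGroupType)
  (S : {group gT}) (act : gT -> B -> B) s :
  S_algebra S act -> s \in S -> act s 1%R = 1%R.
Proof. by case=> Ha _ _ sS; case: (Ha s sS). Qed.
End L.

Lemma gact_in (k : fieldType) (B : algType k) (gT : finGroupType)
  (S : {group gT}) (act : gT -> B -> B) g r :
  inInd S act r -> inInd S act (gact g r).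
Proof. by move=> Hr s x sS; rewrite /gact !ffunE -mulgA; apply: Hr. Qed.

Lemma gact_rb (k : fieldType) (B : algType k) (gT : finGroupType)
  (S : {group gT}) (act : gT -> B -> B) s b :
  S_algebra S act -> s \in S -> gact s (rb S act b) = rb S act (act s b).
Proof.
move=> [Ha A1 AM] sS; apply/ffunP=> x; rewrite /gact !ffunE groupMr //.
by case: ifP => // xS; rewrite AM.
Qed.

Lemma chi_in (k : fieldType) (B : algType k) (gT : finGroupType)
  (S : {group gT}) (act : gT -> B -> B) :
  S_algebra S act -> inInd S act (chi B S).
Proof.
move=> SA s g sS; rewrite !ffunE groupMl //.
by case: ifP; [rewrite (act1 SA sS) | rewrite (act0 SA sS)].
Qed.

Lemma mul_in (k : fieldType) (B : algType k) (gT : finGroupType)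
  (S : {group gT}) (act : gT -> B -> B) r1 r2 :
  S_algebra S act -> inInd S act r1 -> inInd S act r2 ->
  inInd S act [ffun x => (r1 x * r2 x)%R].
Proof.
move=> [Ha _ _] h1 h2 s g sS; rewrite !ffunE h1 // h2 //.
by case: (Ha s sS) => _ ->.
Qed.

Lemma rb_add (k : fieldType) (B : algType k) (gT : finGroupType)
  (S : {group gT}) (act : gT -> B -> B) x y :
  S_algebra S act ->
  rb S act (x + y)%R = [ffun z => (rb S act x z + rb S act y z)%R].
Proof.
move=> [Ha _ _]; apply/ffunP=> z; rewrite !ffunE.
by case: ifP => zS; [case: (Ha z zS) => -> | rewrite addr0].
Qed.

Lemma rb_mul (k : fieldType) (B : algType k) (gT : finGroupType)
  (S : {group gT}) (act : gT -> B -> B) x y :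
  S_algebra S act ->
  rb S act (x * y)%R = [ffun z => (rb S act x z * rb S act y z)%R].
Proof.
move=> [Ha _ _]; apply/ffunP=> z; rewrite !ffunE.
by case: ifP => zS; [case: (Ha z zS) => _ -> | rewrite mulr0].
Qed.

Lemma rb_scale (k : fieldType) (B : algType k) (gT : finGroupType)
  (S : {group gT}) (act : gT -> B -> B) (c : k) x :
  S_algebra S act ->
  rb S act (c *: x)%R = [ffun z => (c *: rb S act x z)%R].
Proof.
move=> [Ha _ _]; apply/ffunP=> z; rewrite !ffunE.
by case: ifP => zS; [case: (Ha z zS) => _ _ _ -> | rewrite scaler0].
Qed.

Lemma rb_one (k : fieldType) (B : algType k) (gT : finGroupType)
  (S : {group gT}) (act : gT -> B -> B) :
  S_algebra S act -> rb S act 1%R = chi B S.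
Proof.
move=> SA; apply/ffunP=> z; rewrite !ffunE.
by case: ifP => zS //; rewrite (act1 SA zS).
Qed.

Lemma supp (k : fieldType) (B : algType k) (gT : finGroupType)
  (S : {group gT}) (act : gT -> B -> B) r :
  S_algebra S act -> inInd S act r ->
  [ffun x => (chi B S x * r x)%R] = rb S act (r 1).
Proof.
move=> SA Hr; apply/ffunP=> z; rewrite !ffunE.
case: ifP => zS; last by rewrite mul0r.
by rewrite mul1r -Hr // mulg1.
Qed.

Lemma part1 (k : fieldType) (B : algType k) (gT : finGroupType)
  (S : {group gT}) (act : gT -> B -> B) :
  S_algebra S act -> exact_left S act.
Proof.
move=> SA; split.
  move=> f1 f2 _ _ H b.
  have := congr1 (fun r : {ffun gT -> B} => r 1) (H _ (rb_in b SA)).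
  by rewrite !ffunE group1; case: SA => _ -> _.
move=> F [Fin [Finj [Fsurj [Fadd [Fmul [F1 [Fsc Fg]]]]]]]; split.
  rewrite /pi_is rcoset1 => Fchi.
  pose f := fun b => F (rb S act b) 1.
  have KF : forall r, inInd S act r -> F r = Ind_map f r.
    move=> r Hr; apply/ffunP=> x.
    have -> : F r x = gact x (F r) 1 by rewrite /gact ffunE mul1g.
    rewrite -Fg // /Ind_map ffunE /f.
    have Hr' := gact_in x Hr.
    have -> : r x = gact x r 1 by rewrite /gact ffunE mul1g.
    rewrite -(supp SA Hr') Fmul; [|exact: chi_in|done]. rewrite ffunE Fchi ffunE group1 mul1r.
    by [].
  have fS : forall s b, s \in S -> f (act s b) = act s (f b).
    move=> s b sS.
    have -> : act s b = rb S act b s by rewrite ffunE sS.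
    have := congr1 (fun r : {ffun gT -> B} => r s) (KF _ (rb_in b SA)).
    rewrite /Ind_map ffunE => <-.
    by rewrite -{1}(mulg1 s); apply: Fin => //; exact: rb_in.
  have ev : forall r, inInd S act r -> f (r 1) = F r 1.
    by move=> r Hr; rewrite KF // ffunE.
  have f0 : f 0%R = 0%R.
    have := congr1 (fun r : {ffun gT -> B} => r 1) (Fadd _ _ (rb_in 0%R SA) (rb_in 0%R SA)).
    rewrite -(rb_add _ _ SA) addr0 ffunE => h.
    by apply: (@addrI _ (f 0%R)); rewrite addr0 -h.
  exists f; last exact: KF. split; last exact: fS. split.
  - move=> x y; rewrite -(rb_1 (x+y)%R SA) ev; last exact: rb_in.
    by rewrite (rb_add _ _ SA) Fadd ?ffunE //; exact: rb_in.
  - move=> x y; rewrite -(rb_1 (x*y)%R SA) ev; last exact: rb_in.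
    by rewrite (rb_mul _ _ SA) Fmul ?ffunE //; exact: rb_in.
  - by rewrite /f (rb_one SA) Fchi ffunE group1.
  - move=> c x; rewrite -(rb_1 (c *: x)%R SA) ev; last exact: rb_in.
    by rewrite (rb_scale _ _ SA) Fsc ?ffunE //; exact: rb_in.
  apply: inj_surj_bij.
    move=> b1 b2 e.
    have : F (rb S act b1) = F (rb S act b2).
      rewrite !KF; try exact: rb_in.
      by apply/ffunP=> x; rewrite !ffunE; case: ifP => xS; rewrite ?fS ?e.
    move/Finj => h; have := h (rb_in b1 SA) (rb_in b2 SA).
    by move/(congr1 (fun r : {ffun gT -> B} => r 1)); rewrite !(rb_1 _ SA).
  move=> y; have [r Hr Fr] := Fsurj _ (rb_in y SA).
  by exists (r 1); rewrite ev // Fr (rb_1 _ SA).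
case=> f [Hf Hfe] KF; rewrite /pi_is rcoset1 KF ?(chi_in SA) //.
apply/ffunP=> x; rewrite !ffunE; case: ifP => _.
  by case: Hf.
exact: aa0.
exact: chi_in.
Qed.

Lemma fwd (k : fieldType) (B : algType k) (gT : finGroupType)
  (S : {group gT}) (act : gT -> B -> B) :
  S_algebra S act -> pi_surjective S act ->
  forall g, g \in 'N(S) -> S_alg_iso S act (twist act g).
Proof.
move=> SA Hs g gN.
have [F [Fin [Finj [Fsurj [Fadd [Fmul [F1 [Fsc Fg]]]]]]] Fchi] := Hs g gN.
rewrite /pi_is in Fchi.
pose f := fun b => F (rb S act b) g.
have Fmc : forall r, inInd S act r ->
    F [ffun x => (chi B S x * r x)%R] = [ffun x => (chi B (S :* g) x * F r x)%R].
  by move=> r Hr; rewrite Fmul ?Fchi //; exact: chi_in.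
have Frb : forall b, F (rb S act b) = [ffun x => (chi B (S :* g) x * F (rb S act b) x)%R].
  move=> b; rewrite -Fmc; last exact: rb_in.
  by rewrite (supp SA (rb_in b SA)) (rb_1 _ SA).
have gSg : forall s, s \in S -> (g * s * g^-1) \in S.
  move=> s sS; have := memJ_norm s (groupVr gN); rewrite sS conjgE invgK.
  by rewrite mulgA.
have fS : forall s b, s \in S -> f (act s b) = twist act g s (f b).
  move=> s b sS; rewrite /f /twist -(gact_rb b SA sS) Fg; last exact: rb_in.
  rewrite /gact ffunE.
  have -> : F (rb S act b) (g * s) = F (rb S act b) ((g * s * g^-1) * g) by rewrite mulgKV.
  exact: (Fin _ (rb_in b SA) _ _ (gSg s sS)).
exists f; split; last exact: fS.
split.
- move=> x y; rewrite /f (rb_add _ _ SA) Fadd ?ffunE //; exact: rb_in.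
- move=> x y; rewrite /f (rb_mul _ _ SA) Fmul ?ffunE //; exact: rb_in.
- by rewrite /f (rb_one SA) Fchi ffunE mem_rcoset mulgV group1.
- move=> c x; rewrite /f (rb_scale _ _ SA) Fsc ?ffunE //; exact: rb_in.
have Fval : forall b x, F (rb S act b) x =
    if x \in S :* g then act (x * g^-1) (f b) else 0%R.
  move=> b x; rewrite {1}Frb ffunE ffunE.
  case: ifP => xSg; last by rewrite mul0r.
  rewrite mul1r /f.
  have {1}-> : x = (x * g^-1 * g)%g by rewrite mulgKV.
  by apply: (Fin _ (rb_in b SA)); rewrite -mem_rcoset.
apply: inj_surj_bij.
  move=> b1 b2 e.
  have : F (rb S act b1) = F (rb S act b2).
    by apply/ffunP=> x; rewrite !Fval e.
  move/Finj => h; have := h (rb_in b1 SA) (rb_in b2 SA).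
  by move/(congr1 (fun r : {ffun gT -> B} => r 1)); rewrite !(rb_1 _ SA).
move=> y.
pose r' := gact g^-1 (rb S act y).
have Hr' : inInd S act r' by apply: gact_in; exact: rb_in.
have [r Hr Fr] := Fsurj _ Hr'.
have Hcr : inInd S act [ffun x => (chi B S x * r x)%R].
  by apply: mul_in => //; exact: chi_in.
have e : [ffun x => (chi B S x * r x)%R] = r.
  apply: Finj => //; rewrite Fmc // Fr; apply/ffunP=> x.
  rewrite !ffunE mem_rcoset.
  by case: ifP => xS; [rewrite mul1r | rewrite mul0r].
exists (r 1); rewrite /f -(supp SA Hr) e Fr /r' /gact ffunE mulgV.
exact: rb_1.
Qed.

Lemma bwd (k : fieldType) (B : algType k) (gT : finGroupType)
  (S : {group gT}) (act : gT -> B -> B) :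
  S_algebra S act ->
  (forall g, g \in 'N(S) -> S_alg_iso S act (twist act g)) -> pi_surjective S act.
Proof.
move=> SA H g gN.
have [phi [Hphi phiS]] := H g gN.
have phi0 := aa0 Hphi.
case: Hphi => phiD phiM phi1 phiZ phib.
have phii := bij_inj phib.
case: phib => psi phiK psiK.
rewrite /twist in phiS.
have gNV : g^-1 \in 'N(S) by exact: groupVr.
pose F := fun r : {ffun gT -> B} => [ffun x => phi (r (g^-1 * x))].
exists F; last first.
  rewrite /pi_is; apply/ffunP=> x; rewrite !ffunE mem_rcoset.
  rewrite -(memJ_norm _ gNV) conjgE invgK -!mulgA mulKVg.
  by case: ifP.
split.
  move=> r Hr s x sS; rewrite !ffunE.
  have -> : (g^-1 * (s * x) = (s ^ g) * (g^-1 * x))%g by rewrite conjgE -!mulgA mulKVg.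
  rewrite Hr ?memJ_norm // phiS ?memJ_norm //.
  by rewrite conjgE mulKVg mulgK.
split.
  move=> r1 r2 _ _ e; apply/ffunP=> x.
  have := congr1 (fun r : {ffun gT -> B} => r (g * x)%g) e.
  by rewrite !ffunE mulKg => /phii.
split.
  move=> r' Hr'; exists [ffun y => psi (r' (g * y))]; last first.
    by apply/ffunP=> x; rewrite !ffunE mulKVg psiK.
  move=> s y sS; rewrite !ffunE.
  have -> : (g * (s * y) = (s ^ g^-1) * (g * y))%g.
    by rewrite conjgE invgK -!mulgA mulKg.
  rewrite (Hr' (s ^ g^-1) (g * y)) ?memJ_norm //; apply: phii; rewrite psiK phiS ?psiK //.
  by rewrite conjgE invgK mulgA.
split.
  by move=> r1 r2 _ _; apply/ffunP=> x; rewrite !ffunE phiD.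
split.
  by move=> r1 r2 _ _; apply/ffunP=> x; rewrite !ffunE phiM.
split.
  by apply/ffunP=> x; rewrite !ffunE phi1.
split.
  by move=> c r _; apply/ffunP=> x; rewrite !ffunE phiZ.
by move=> h r _; apply/ffunP=> x; rewrite /gact !ffunE mulgA.
Qed.

Theorem proposition3p1 (k : fieldType) (B : algType k) (gT : finGroupType)
  (S : {group gT}) (act : gT -> B -> B) :
  S_Galois S act -> simple_algebra B ->
  exact_left S act /\
  ((exact_left S act /\ pi_surjective S act) <->
   (forall g, g \in 'N(S) -> S_alg_iso S act (twist act g))).
Proof.
case=> _ SA _ _ _ _; split; first exact: part1.
split; first by case=> _; exact: fwd.
by move=> H; split; [exact: part1 | exact: bwd].
Qed.
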